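(* Let $0<p<1$. Every Schur $\mathcal{C}_p$-bounded pattern is a subset of a set of the form $(F\times\mathbb{N})\cup(\mathbb{N}\times F)$ for some finite $F\subseteq\mathbb{N}$.
   Context: $\mathcal{C}_p$ is the Schatten ideal of compact operators $A$ on $\ell_2(\mathbb{N})$ with $\|A\|_{\mathcal{C}_p}=(\sum_{k\ge0}\mu(k,A)^p)^{1/p}<\infty$, where $\mu(k,A)=\inf\{\|A-R\|_\infty:\mathrm{rank}(R)\le k\}$. For $m\in\ell_\infty(\mathbb{N}^2)$, $T_m(\{A_{j,k}\})=\{m(j,k)A_{j,k}\}$; $m$ is a bounded Schur multiplier of $\mathcal{C}_p$ if $\|T_m(A)\|_{\mathcal{C}_p}\le C_m\|A\|_{\mathcal{C}_p}$ for all finitely supported matrices $A$; $S\subseteq\mathbb{N}^2$ is a Schur $\mathcal{C}_p$-bounded pattern if every $m\in\ell_\infty(\mathbb{N}^2)$ supported on $S$ is a bounded Schur multiplier of $\mathcal{C}_p$. *)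

(* Defs.v *)
From HB Require Import structures.
From mathcomp Require Import all_boot all_order all_algebra.
From mathcomp Require Import all_classical all_reals all_analysis.
From mathcomp Require Import complex.
From mathcomp Require Import Rstruct Rstruct_topology.
Set Implicit Arguments. Unset Strict Implicit. Unset Printing Implicit Defensive.
Import Order.TTheory GRing.Theory Num.Theory.
Local Open Scope classical_set_scope.
Local Open Scope ring_scope.

Notation RR := Rdefinitions.R.
Notation CC := (complex RR).

Definition cabs (z : CC) : RR := Normc.normc z.

Definition imat := nat -> nat -> CC.

Definition supported_in (n : nat) (A : imat) : Prop :=
  forall i j, (n <= i)%N \/ (n <= j)%N -> A i j = 0.

Definition finsupp (A : imat) : Prop := exists n, supported_in n A.

Definition msub (A B : imat) : imat := fun i j => A i j - B i j.

Definition rank_le (B : imat) (k : nat) : Prop :=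
  exists n, supported_in n B /\ (\rank (\matrix_(i < n, j < n) B i j) <= k)%N.

Definition opnorm (B : imat) : RR :=
  sup [set r : RR | exists (N : nat) (x : nat -> CC),
         \sum_(j < N) cabs (x j) ^+ 2 <= 1 /\
         r = Num.sqrt (\sum_(i < N) cabs (\sum_(j < N) B i j * x j) ^+ 2)].

(* k-th singular value (approximation number)
   mu(k,A) = inf { ||A - R||_inf : rank R <= k } *)
Definition sing (k : nat) (A : imat) : RR :=
  inf [set r : RR | exists B : imat, finsupp B /\ rank_le B k /\ r = opnorm (msub A B)].

Definition schatten (p : RR) (A : imat) : RR :=
  (sup [set s : RR | exists N : nat, s = \sum_(k < N) (sing k A) `^ p]) `^ (p^-1).

Definition schur (m : imat) (A : imat) : imat := fun j k => m j k * A j k.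

Definition bounded_fun (m : imat) : Prop :=
  exists M : RR, forall j k, cabs (m j k) <= M.

Definition schur_bounded (p : RR) (m : imat) : Prop :=
  exists Cm : RR, forall A : imat, finsupp A ->
    schatten p (schur m A) <= Cm * schatten p A.

Definition schur_bounded_pattern (p : RR) (S : set (nat * nat)) : Prop :=
  forall m : imat, bounded_fun m ->
    (forall j k, ~ S (j, k) -> m j k = 0) -> schur_bounded p m.

(* Main.v *)
Require Import Defs.
From mathcomp Require Import all_boot all_order all_algebra.
From mathcomp Require Import all_classical all_reals all_analysis.
From mathcomp Require Import complex Rstruct Rstruct_topology.
Set Implicit Arguments. Unset Strict Implicit. Unset Printing Implicit Defensive.
Import Order.TTheory GRing.Theory Num.Theory.
Local Open Scope classical_set_scope.
Local Open Scope ring_scope.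

Lemma cabs_ge0 (z : CC) : 0 <= cabs z.
Proof. by case: z => a b; rewrite /cabs /Normc.normc sqrtr_ge0. Qed.

Lemma cabsD (x y : CC) : cabs (x + y) <= cabs x + cabs y.
Proof. exact: (@le_normcD RR x y). Qed.

Lemma cabsM (x y : CC) : cabs (x * y) = cabs x * cabs y.
Proof. exact: Normc.normcM. Qed.

Lemma cabs0 : cabs 0 = 0.
Proof. exact: Normc.normc0. Qed.

Lemma cabs1 : cabs 1 = 1.
Proof. exact: Normc.normc1. Qed.

Lemma cabs_sum N (f : 'I_N -> CC) : cabs (\sum_(i < N) f i) <= \sum_(i < N) cabs (f i).
Proof.
elim/big_ind2: _ => //; first by rewrite cabs0.
move=> x1 x2 y1 y2 h1 h2; apply: le_trans (cabsD _ _) _; exact: lerD.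
Qed.

From mathcomp Require Import ring lra.

Lemma real_CS N (u v : 'I_N -> RR) :
  (\sum_(i < N) u i * v i) ^+ 2 <= (\sum_(i < N) u i ^+ 2) * (\sum_(i < N) v i ^+ 2).
Proof.
set U := \sum_(i < N) u i ^+ 2; set V := \sum_(i < N) v i ^+ 2;
set W := \sum_(i < N) u i * v i.
have U0 : 0 <= U by apply: sumr_ge0 => i _; exact: sqr_ge0.
have key : 0 <= \sum_(i < N) (u i * W - v i * U) ^+ 2 by apply: sumr_ge0 => i _; exact: sqr_ge0.
have E : \sum_(i < N) (u i * W - v i * U) ^+ 2 = U * (U * V - W ^+ 2).
  rewrite (eq_bigr (fun i => W ^+ 2 * u i ^+ 2 - (2 * W * U) * (u i * v i) + U ^+ 2 * v i ^+ 2));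
    last by move=> i _; ring.
  rewrite big_split /= sumrB -!mulr_sumr -/U -/V -/W; ring.
rewrite E in key.
have [U00|Upos] := eqVneq U 0.
  have u0 : forall i, u i = 0.
    move=> i; apply/eqP; rewrite -sqrf_eq0; apply/eqP.
    move/eqP: U00; rewrite psumr_eq0 => [/allP H|j _]; last exact: sqr_ge0.
    by apply/eqP; apply: (H i); rewrite mem_index_enum.
  rewrite /W big1 ?expr0n //= ?mulr_ge0 //; last by move=> i _; rewrite u0 mul0r.
  by apply: sumr_ge0 => i _; exact: sqr_ge0.
have Ug : 0 < U by rewrite lt_def Upos U0.
by rewrite -subr_ge0; rewrite pmulr_rge0 in key.
Qed.

Lemma cCS N (a x : 'I_N -> CC) :
  cabs (\sum_(i < N) a i * x i) ^+ 2 <=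
  (\sum_(i < N) cabs (a i) ^+ 2) * (\sum_(i < N) cabs (x i) ^+ 2).
Proof.
apply: le_trans (real_CS (fun i => cabs (a i)) (fun i => cabs (x i))).
have h1 : cabs (\sum_(i < N) a i * x i) <= \sum_(i < N) cabs (a i) * cabs (x i).
  apply: le_trans (cabs_sum (fun i => a i * x i)) _.
  by apply: ler_sum => i _; rewrite cabsM.
rewrite !expr2; apply: ler_pM; rewrite ?cabs_ge0 //.
Qed.

Lemma sum_ind N (x : nat) : \sum_(i < N) ((i : nat) == x)%:R = ((x < N)%N)%:R :> RR.
Proof.
elim: N => [|N IH]; first by rewrite big_ord0.
rewrite big_ord_recr /= IH.
case: (ltngtP x N) => h.
- by rewrite ltnS (ltnW h) addr0.
- by rewrite ltnS leqNgt h addr0.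
- by rewrite h ltnSn add0r.
Qed.

Lemma sum_const_seq (s : seq nat) (c : RR) : \sum_(x <- s) c = (size s)%:R * c.
Proof.
elim: s => [|x s IH]; first by rewrite big_nil mul0r.
by rewrite big_cons IH /= -addn1 natrD mulrDl mul1r addrC.
Qed.

Lemma count_bound N (f : nat -> RR) (s : seq nat) (c : RR) :
  (forall i, 0 <= f i <= c) -> (forall i, f i != 0 -> i \in s) ->
  \sum_(i < N) f i <= (size s)%:R * c.
Proof.
move=> fb fs.
have c0 : 0 <= c by case/andP: (fb 0%N) => h1 h2; exact: le_trans h1 h2.
apply: (@le_trans _ _ (\sum_(i < N) \sum_(x <- s) c * ((i : nat) == x)%:R)).
  apply: ler_sum => i _.
  have [fi0|fi0] := eqVneq (f i) 0.
    by rewrite fi0; apply: sumr_ge0 => x _; rewrite mulr_ge0 ?ler0n.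
  rewrite (big_rem (i : nat)) ?fs //= eqxx mulr1.
  case/andP: (fb i) => _ h; apply: le_trans h _; rewrite lerDl.
  by apply: sumr_ge0 => x _; rewrite mulr_ge0 ?ler0n.
rewrite exchange_big /= -sum_const_seq; apply: ler_sum => x _.
rewrite -mulr_sumr sum_ind; apply: ler_piMr => //.
by case: (x < N)%N.
Qed.

Definition opset (B : imat) : set RR := [set r : RR | exists (N : nat) (x : nat -> CC),
         \sum_(j < N) cabs (x j) ^+ 2 <= 1 /\
         r = Num.sqrt (\sum_(i < N) cabs (\sum_(j < N) B i j * x j) ^+ 2)].

Lemma opnormE B : opnorm B = sup (opset B). Proof. by []. Qed.

Definition opbound (B : imat) (K : RR) := forall N (x : nat -> CC),
  \sum_(j < N) cabs (x j) ^+ 2 <= 1 ->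
  \sum_(i < N) cabs (\sum_(j < N) B i j * x j) ^+ 2 <= K ^+ 2.

Lemma opset0 B : opset B 0.
Proof. exists 0%N, (fun _ => 0); by rewrite !big_ord0 sqrtr0. Qed.

Lemma opnorm_le B K : 0 <= K -> opbound B K -> has_ubound (opset B) /\ opnorm B <= K.
Proof.
move=> K0 hb.
have ub : ubound (opset B) K.
  move=> r [N [x [hx ->]]].
  rewrite -(ger0_norm K0) -sqrtr_sqr ler_sqrt ?sqr_ge0 //; exact: hb.
split; first by exists K.
by rewrite opnormE; apply: ge_sup => //; exists 0; exact: opset0.
Qed.

Lemma opnorm_ge B r : has_ubound (opset B) -> opset B r -> r <= opnorm B.
Proof. by move=> hu hr; rewrite opnormE; exact: ub_le_sup. Qed.

Lemma opbound_supp B (rs cs : seq nat) (c : RR) :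
  (forall i j, cabs (B i j) <= c) -> (forall i j, B i j != 0 -> i \in rs /\ j \in cs) ->
  opbound B (Num.sqrt ((size rs)%:R * ((size cs)%:R * c ^+ 2))).
Proof.
move=> hc hs N x hx.
have c0 : 0 <= c by apply: le_trans (hc 0%N 0%N); exact: cabs_ge0.
rewrite sqr_sqrtr ?mulr_ge0 ?sqr_ge0 ?ler0n //.
apply: (@count_bound _ (fun i => cabs (\sum_(j < N) B i j * x j) ^+ 2)).
  move=> i; rewrite sqr_ge0 /=.
  apply: le_trans (cCS _ _) _.
  rewrite -[X in _ <= X]mulr1; apply: ler_pM => //;
    [by apply: sumr_ge0 => j _; exact: sqr_ge0|by apply: sumr_ge0 => j _; exact: sqr_ge0|].
  apply: (@count_bound _ (fun j => cabs (B i j) ^+ 2)).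
    move=> j; rewrite sqr_ge0 /= ler_sqr ?nnegrE ?cabs_ge0 //.
  move=> j; apply: contraR => hj.
  have -> : B i j = 0 by apply/eqP; apply: contraT => /hs [] _ hj'; rewrite hj' in hj.
  by rewrite cabs0 expr0n.
move=> i; apply: contraR => hi.
rewrite big1 ?cabs0 ?expr0n // => j _.
have -> : B i j = 0 by apply/eqP; apply: contraT => /hs [] hi' _; rewrite hi' in hi.
by rewrite mul0r.
Qed.

Lemma finsupp_ub B : finsupp B -> has_ubound (opset B).
Proof.
case=> M hM.
set c := \sum_(i < M) \sum_(j < M) cabs (B i j).
have c0 : 0 <= c by apply: sumr_ge0 => i _; apply: sumr_ge0 => j _; exact: cabs_ge0.
have hc : forall i j, cabs (B i j) <= c.
  move=> i j; case: (ltnP i M) => hi; last by rewrite hM ?cabs0 //; left.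
  case: (ltnP j M) => hj; last by rewrite hM ?cabs0 //; right.
  rewrite /c (bigD1 (Ordinal hi)) //= (bigD1 (Ordinal hj)) //= -addrA lerDl.
  by rewrite addr_ge0 ?sumr_ge0 // => *; rewrite ?sumr_ge0 // => *; exact: cabs_ge0.
have := @opbound_supp B (iota 0 M) (iota 0 M) c hc.
have hs : forall i j, B i j != 0 -> i \in iota 0 M /\ j \in iota 0 M.
  move=> i j hB; rewrite !mem_iota /= !add0n; split.
    by apply: contraR hB; rewrite -leqNgt => h; rewrite hM ?eqxx //; left.
  by apply: contraR hB; rewrite -leqNgt => h; rewrite hM ?eqxx //; right.
move/(_ hs) => hb.
by case: (opnorm_le (sqrtr_ge0 _) hb).
Qed.

Lemma opnorm_ge0 B : finsupp B -> 0 <= opnorm B.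
Proof. move=> hB; apply: opnorm_ge (finsupp_ub hB) (opset0 B). Qed.

Definition Z0 : imat := fun _ _ => 0.

Lemma finsupp_Z0 : finsupp Z0. Proof. by exists 0%N. Qed.

Lemma rank_Z0 k : rank_le Z0 k.
Proof.
exists 0%N; split; first by [].
by apply: leq_trans (rank_leq_row _) _.
Qed.

Lemma msubZ0 A : msub A Z0 = A.
Proof. by apply: funext => i; apply: funext => j; rewrite /msub /Z0 subr0. Qed.

Lemma finsupp_msub A B : finsupp A -> finsupp B -> finsupp (msub A B).
Proof.
move=> [n hA] [m hB]; exists (maxn n m) => i j h.
rewrite /msub hA ?hB ?subr0 //.
  by case: h => h; [left|right]; apply: leq_trans h; rewrite leq_maxr.
by case: h => h; [left|right]; apply: leq_trans h; rewrite leq_maxl.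
Qed.

Lemma opnorm_msub_self A : opnorm (msub A A) <= 0.
Proof.
have hb : opbound (msub A A) 0.
  move=> N x _; rewrite expr0n /= big1 // => i _.
  by rewrite big1 ?cabs0 ?expr0n // => j _; rewrite /msub subrr mul0r.
by case: (opnorm_le (lexx 0) hb).
Qed.

Definition singset (k : nat) (A : imat) : set RR :=
  [set r : RR | exists B : imat, finsupp B /\ rank_le B k /\ r = opnorm (msub A B)].

Lemma singE k A : sing k A = inf (singset k A). Proof. by []. Qed.

Lemma singset_lb k A : finsupp A -> lbound (singset k A) 0.
Proof. by move=> hA r [B [hB [_ ->]]]; apply: opnorm_ge0; apply: finsupp_msub. Qed.

Lemma singset_ne k A : singset k A !=set0.
Proof. by exists (opnorm (msub A Z0)), Z0; split; [exact: finsupp_Z0|split; [exact: rank_Z0|]]. Qed.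

Lemma sing_ge0 k A : finsupp A -> 0 <= sing k A.
Proof. by move=> hA; rewrite singE; apply: lb_le_inf; [exact: singset_ne|exact: singset_lb]. Qed.

Lemma sing_le k A B : finsupp A -> finsupp B -> rank_le B k -> sing k A <= opnorm (msub A B).
Proof.
move=> hA hB hr; rewrite singE; apply: ge_inf; first by exists 0; exact: singset_lb.
by exists B.
Qed.

Lemma sing_ge k A r : (forall B, finsupp B -> rank_le B k -> r <= opnorm (msub A B)) -> r <= sing k A.
Proof.
move=> h; rewrite singE; apply: lb_le_inf; first exact: singset_ne.
by move=> y [B [hB [hr ->]]]; exact: h.
Qed.

Lemma sing_big k A M : supported_in M A -> (M <= k)%N -> sing k A <= 0.
Proof.
move=> hM hk.
have hA : finsupp A by exists M.
apply: le_trans (opnorm_msub_self A).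
apply: sing_le => //; exists M; split => //.
by apply: leq_trans (rank_leq_row _) hk.
Qed.

Lemma sing_le_op k A : finsupp A -> sing k A <= opnorm A.
Proof.
move=> hA; rewrite -{2}(msubZ0 A); apply: sing_le => //; [exact: finsupp_Z0|exact: rank_Z0].
Qed.

Lemma pow0R (p : RR) : 0 < p -> (0 : RR) `^ p = 0.
Proof. by move=> p0; rewrite powR0 // gt_eqF. Qed.

Definition psum (p : RR) (A : imat) : set RR :=
  [set s : RR | exists N : nat, s = \sum_(k < N) (sing k A) `^ p].

Lemma schattenE p A : schatten p A = (sup (psum p A)) `^ (p^-1). Proof. by []. Qed.

Lemma psum0 p A : psum p A 0. Proof. by exists 0%N; rewrite big_ord0. Qed.

Lemma schatten_le p A K : 0 < p -> finsupp A -> 0 <= K -> sing 0 A <= K ->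
  (forall k, (0 < k)%N -> sing k A <= 0) -> schatten p A <= K.
Proof.
move=> p0 hA K0 h0 hk.
have sk0 : forall k, (0 < k)%N -> sing k A = 0.
  by move=> k k0; apply/eqP; rewrite eq_le hk //= sing_ge0.
have ub : ubound (psum p A) (K `^ p).
  move=> s [N ->]; rewrite -[X in _ <= X]mul1r.
  have -> : 1 = (size [:: 0%N])%:R :> RR by [].
  apply: (@count_bound _ (fun k => sing k A `^ p)).
    move=> k; rewrite powR_ge0 /=.
    case: k => [|k].
      by apply: ge0_ler_powR => //; [exact: ltW | rewrite nnegrE; exact: sing_ge0].
    by rewrite (sk0 k.+1) // pow0R // powR_ge0.
  move=> k; case: k => [|k] //; by rewrite (sk0 k.+1) // pow0R // eqxx.
have s0 : 0 <= sup (psum p A) by apply: ub_le_sup; [exists (K `^ p)|exact: psum0].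
have sK : sup (psum p A) <= K `^ p by apply: ge_sup => //; exists 0; exact: psum0.
rewrite schattenE.
apply: le_trans (ge0_ler_powR _ _ _ sK) _.
- by rewrite invr_ge0 ltW.
- by rewrite nnegrE.
- by rewrite nnegrE powR_ge0.
by rewrite -powRrM mulfV ?gt_eqF // powRr1.
Qed.

Lemma schatten_ge p A n : 0 < p -> finsupp A -> (forall k, (k < n)%N -> 1 <= sing k A) ->
  n%:R `^ (p^-1) <= schatten p A.
Proof.
move=> p0 hA h1.
have [M hM] := hA.
have ub : ubound (psum p A) ((size (iota 0 M))%:R * opnorm A `^ p).
  move=> s [N ->].
  apply: (@count_bound _ (fun k => sing k A `^ p)).
    move=> k; rewrite powR_ge0 /=.
    apply: ge0_ler_powR; [exact: ltW|rewrite nnegrE; exact: sing_ge0|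
      rewrite nnegrE; exact: opnorm_ge0|exact: sing_le_op].
  move=> k; apply: contraR; rewrite mem_iota add0n /= -leqNgt => hk.
  have -> : sing k A = 0 by apply/eqP; rewrite eq_le sing_ge0 // (sing_big hM hk).
  by rewrite pow0R.
have sn : n%:R <= sup (psum p A).
  apply: (@le_trans _ _ (\sum_(k < n) sing k A `^ p)); last first.
    by apply: ub_le_sup; [exists ((size (iota 0 M))%:R * opnorm A `^ p)|exists n].
  have -> : n%:R = \sum_(k < n) (1 : RR) by rewrite sumr_const card_ord.
  apply: ler_sum => k _.
  have -> : (1:RR) = 1 `^ p by rewrite powR1.
  apply: ge0_ler_powR; [exact: ltW|by rewrite nnegrE|
    rewrite nnegrE; exact: sing_ge0|exact: h1].
rewrite schattenE; apply: ge0_ler_powR => //.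
- by rewrite invr_ge0 ltW.
- by rewrite nnegrE.
- by rewrite nnegrE; apply: le_trans sn.
Qed.

Lemma sum_pick (V : pzRingType) N (F : nat -> V) (x : nat) :
  \sum_(j < N) F j * ((j : nat) == x)%:R = if (x < N)%N then F x else 0.
Proof.
case: ltnP => hx.
  rewrite (bigD1 (Ordinal hx)) //= eqxx mulr1 big1 ?addr0 // => j hj.
  have -> : ((j : nat) == x) = false.
    by apply/negbTE; apply: contra hj => /eqP E; apply/eqP; apply: val_inj.
  by rewrite mulr0.
rewrite big1 // => j _.
have -> : ((j : nat) == x) = false by apply/negbTE; rewrite neq_ltn (leq_trans (ltn_ord j) hx).
by rewrite mulr0.
Qed.

Lemma sum_one (V : pzRingType) n (g : nat -> nat) (ginj : injective g) (F : 'I_n -> V) (j : nat) :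
  \sum_(a < n) F a * ((j == g a)%:R) =
  if [pick a : 'I_n | g a == j] is Some a then F a else 0.
Proof.
case: pickP => [a0 /eqP ha0|hn].
  rewrite (bigD1 a0) //= ha0 eqxx mulr1 big1 ?addr0 // => a ha.
  have -> : (j == g a) = false.
    apply/negbTE; apply: contra ha; rewrite -ha0 => /eqP /ginj E; apply/eqP; exact: val_inj.
  by rewrite mulr0.
rewrite big1 // => a _; have := hn a; rewrite eq_sym => ->; by rewrite mulr0.
Qed.

Section Spread.
Variables (n : nat) (g : nat -> nat) (ginj : injective g) (w : 'I_n -> CC) (N : nat)
  (gN : forall a : 'I_n, (g a < N)%N).

Definition spread (j : nat) : CC := \sum_(a < n) w a * ((j == g a)%:R).

Lemma spread_norm : \sum_(j < N) cabs (spread j) ^+ 2 = \sum_(a < n) cabs (w a) ^+ 2.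
Proof.
have E : forall j : nat, cabs (spread j) ^+ 2 = \sum_(a < n) cabs (w a) ^+ 2 * ((j == g a)%:R).
  move=> j; rewrite /spread !(sum_one ginj).
  by case: pickP => [a _|_] //; rewrite cabs0 expr0n.
under eq_bigr => j _ do rewrite E.
rewrite exchange_big /=; apply: eq_bigr => a _.
rewrite -mulr_sumr.
have -> : \sum_(j < N) ((j : nat) == g a)%:R = 1 :> RR.
  by have := @sum_pick _ N (fun _ => (1 : RR)) (g a); under eq_bigr => j _ do rewrite mul1r; rewrite gN.
by rewrite mulr1.
Qed.

Lemma spread_dot (F : nat -> CC) : \sum_(j < N) F j * spread j = \sum_(a < n) w a * F (g a).
Proof.
rewrite /spread; under eq_bigr => j _ do rewrite mulr_sumr.
rewrite exchange_big /=; apply: eq_bigr => a _.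
have := @sum_pick _ N (fun j => w a * F j) (g a); rewrite gN => <-.
by apply: eq_bigr => j _; rewrite mulrCA mulrA. 
Qed.

End Spread.

Lemma kernel_vec n k (B : imat) M (g : nat -> nat) : supported_in M B ->
  (\rank (\matrix_(i < M, j < M) B i j) <= k)%N -> (k < n)%N ->
  exists v : 'I_n -> CC, (exists a, v a != 0) /\ forall i : nat, \sum_(a < n) v a * B i (g a) = 0.
Proof.
move=> hM hr hkn.
set Bm := \matrix_(i < M, j < M) B i j.
set E : 'M[CC]_(M, n) := \matrix_(j, a) (((j : nat) == g a)%:R).
set K := Bm *m E.
have KE : forall (i : 'I_M) (a : 'I_n), K i a = B i (g a).
  move=> i a; rewrite /K mxE; under eq_bigr => j _ do rewrite !mxE.
  rewrite (@sum_pick _ M (fun j => B i j)); case: ltnP => // h.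
  by rewrite hM //; right.
have rk : (\rank K <= k)%N by apply: leq_trans (mxrankM_maxl _ _) hr.
set Kr := kermx K^T.
have : Kr != 0.
  rewrite -mxrank_eq0 /Kr mxrank_ker mxrank_tr subn_eq0 -ltnNge.
  exact: leq_ltn_trans rk hkn.
case/matrix0Pn => a0 [b0 hab].
exists (fun a => Kr a0 a); split; first by exists b0.
move=> i; case: (ltnP i M) => hi.
  have := mulmx_ker K^T; rewrite -/Kr => /matrixP/(_ a0 (Ordinal hi)).
  rewrite !mxE => H; apply: etrans H.
  by apply: eq_bigr => a _; rewrite [K^T _ _]mxE KE.
by rewrite big1 // => a _; rewrite hM ?mulr0 //; left.
Qed.

Lemma cabs_real (t : RR) : 0 <= t -> cabs ((t%:C)%C) = t.
Proof. by move=> t0; rewrite /cabs /Normc.normc /= expr0n /= addr0 sqrtr_sqr ger0_norm. Qed.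

Section Construction.
Variables (r c : nat -> nat) (rinj : injective r) (cinj : injective c) (n : nat).

Definition Aone : imat := fun i j =>
  if (i \in map r (iota 0 n)) && (j \in map c (iota 0 n)) then 1 else 0.

Definition Pm : imat := fun i j =>
  if has (fun a => (r a == i) && (c a == j)) (iota 0 n) then 1 else 0.

Definition Mb : nat := \max_(a < n) (maxn (r a) (c a)).+1.

Lemma rc_lt a : (a < n)%N -> (r a < Mb)%N /\ (c a < Mb)%N.
Proof.
move=> ha; have := @leq_bigmax _ (fun a : 'I_n => (maxn (r a) (c a)).+1) (Ordinal ha).
rewrite /Mb /= => h; split; apply: leq_trans h; rewrite ltnS ?leq_maxl ?leq_maxr //.
Qed.

Lemma Aone_supp : supported_in Mb Aone.
Proof.
move=> i j h; rewrite /Aone.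
case: ifP => // /andP [/mapP [a ha Ea] /mapP [b hb Eb]]; subst i j.
move: ha hb; rewrite !mem_iota !add0n /= => ha hb.
have [h1 _] := rc_lt ha; have [_ h2] := rc_lt hb.
by case: h => h; [move: (leq_trans h1 h)|move: (leq_trans h2 h)]; rewrite ltnn.
Qed.

Lemma Pm_supp : supported_in Mb Pm.
Proof.
move=> i j h; rewrite /Pm.
case: ifP => // /hasP [a ha /andP [/eqP Ea /eqP Eb]]; subst i j.
move: ha; rewrite mem_iota add0n /= => ha.
have [h1 h2] := rc_lt ha.
by case: h => h; [move: (leq_trans h1 h)|move: (leq_trans h2 h)]; rewrite ltnn.
Qed.

Lemma Aone_fs : finsupp Aone. Proof. by exists Mb; exact: Aone_supp. Qed.
Lemma Pm_fs : finsupp Pm. Proof. by exists Mb; exact: Pm_supp. Qed.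

Lemma Aone_op : opnorm Aone <= n%:R.
Proof.
have hb := @opbound_supp Aone (map r (iota 0 n)) (map c (iota 0 n)) 1.
have := hb _ _; rewrite !size_map size_iota expr1n mulr1 -expr2 sqrtr_sqr ger0_norm ?ler0n //.
move=> hb'; case: (opnorm_le (ler0n _ _) (hb' _ _)) => // [i j|i j].
  by rewrite /Aone; case: ifP; rewrite ?cabs1 ?cabs0.
by rewrite /Aone; case: ifP => [/andP [] //|]; rewrite eqxx.
Qed.

Lemma Aone_sing0 : sing 0 Aone <= n%:R.
Proof.
apply: le_trans Aone_op; rewrite -{2}(msubZ0 Aone).
apply: sing_le; [exact: Aone_fs|exact: finsupp_Z0|exact: rank_Z0].
Qed.

Lemma Aone_rank : (\rank (\matrix_(i < Mb, j < Mb) Aone i j) <= 1)%N.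
Proof.
set u : 'M[CC]_(Mb, 1) := \matrix_(i, t) (if (i : nat) \in map r (iota 0 n) then 1 else 0).
set v : 'M[CC]_(1, Mb) := \matrix_(t, j) (if (j : nat) \in map c (iota 0 n) then 1 else 0).
have -> : \matrix_(i < Mb, j < Mb) Aone i j = u *m v.
  apply/matrixP => i j; rewrite !mxE big_ord1 !mxE /Aone.
  by case: (_ \in _); case: (_ \in _); rewrite /= ?mulr1 ?mulr0 ?mul0r.
by apply: leq_trans (mxrankM_maxl _ _) (rank_leq_col _).
Qed.

Lemma Aone_singk k : (0 < k)%N -> sing k Aone <= 0.
Proof.
move=> k0; apply: le_trans (opnorm_msub_self Aone).
apply: sing_le; [exact: Aone_fs|exact: Aone_fs|].
by exists Mb; split; [exact: Aone_supp|exact: leq_trans Aone_rank k0].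
Qed.


Lemma Pm_col i a : (a < n)%N -> Pm i (c a) = ((i == r a)%:R : CC).
Proof.
move=> ha; rewrite /Pm.
case: (eqVneq i (r a)) => [->|hne].
  by rewrite (introT hasP) //; exists a; rewrite ?mem_iota ?add0n //= !eqxx.
case: hasP => // [[b _ /andP [/eqP E1 /eqP E2]]].
by move: hne; rewrite -E1 (cinj E2) eqxx.
Qed.

Lemma Pm_sing k : (k < n)%N -> 1 <= sing k Pm.
Proof.
move=> hkn; apply: sing_ge => B hB [M' [hM' hr]].
have [v [[b0 hb0] hv]] := kernel_vec c hM' hr hkn.
set s := \sum_(a < n) cabs (v a) ^+ 2.
have s0 : 0 < s.
  rewrite lt_def sumr_ge0 ?andbT; last by move=> a _; exact: sqr_ge0.
  apply/eqP => /eqP; rewrite psumr_eq0 => [/allP /(_ b0) H|a _]; last exact: sqr_ge0.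
  move: H; rewrite mem_index_enum => /(_ isT) /eqP /eqP; rewrite sqrf_eq0 => /eqP /Normc.eq0_normc.
  by move/eqP; rewrite (negbTE hb0).
set t : CC := (((Num.sqrt s)^-1)%:C)%C.
have ht : cabs t = (Num.sqrt s)^-1 by rewrite cabs_real // invr_ge0 sqrtr_ge0.
set w := fun a : 'I_n => v a * t.
have hw : \sum_(a < n) cabs (w a) ^+ 2 = 1.
  under eq_bigr => a _ do rewrite /w cabsM ht exprMn.
  rewrite -mulr_suml -/s exprVn sqr_sqrtr ?ltW // mulfV //.
  by rewrite gt_eqF.
set Nb := maxn Mb M'.
have rcN : forall a : 'I_n, (r a < Nb)%N /\ (c a < Nb)%N.
  move=> a; have [h1 h2] := rc_lt (ltn_ord a).
  by split; apply: leq_trans (leq_maxl _ _); [exact: h1|exact: h2].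
have cN : forall a : 'I_n, (c a < Nb)%N by move=> a; case: (rcN a).
have rN : forall a : 'I_n, (r a < Nb)%N by move=> a; case: (rcN a).
have hfs : finsupp (msub Pm B) by apply: finsupp_msub => //; exact: Pm_fs.
apply: opnorm_ge (finsupp_ub hfs) _.
exists Nb, (spread c w); split; first by rewrite (spread_norm cinj w cN) hw.
have row : forall i : nat, \sum_(j < Nb) msub Pm B i j * spread c w j = spread r w i.
  move=> i; rewrite (spread_dot w cN (fun j => msub Pm B i j)) /msub /spread.
  under eq_bigr => a _ do rewrite mulrBr.
  rewrite sumrB.
  have -> : \sum_(a < n) w a * B i (c a) = 0.
    rewrite /w; under eq_bigr => a _ do rewrite mulrAC.
    by rewrite -mulr_suml hv mul0r.
  rewrite subr0; apply: eq_bigr => a _; rewrite Pm_col //.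
under eq_bigr => i _ do rewrite row.
by rewrite (spread_norm rinj w rN) hw sqrtr1.
Qed.


Definition mdiag : imat := fun i j => if `[< exists a, r a = i /\ c a = j >] then 1 else 0.

Lemma schur_diag : schur mdiag Aone = Pm.
Proof.
apply: funext => i; apply: funext => j; rewrite /schur /mdiag /Aone /Pm.
case: hasP => [[a ha /andP [/eqP Ei /eqP Ej]]|hn].
  have -> : `[< exists a, r a = i /\ c a = j >] = true by apply/asboolP; exists a.
  have -> : i \in map r (iota 0 n) by rewrite -Ei map_f.
  have -> : j \in map c (iota 0 n) by rewrite -Ej map_f.
  by rewrite mulr1.
case: asboolP => [[a [Ei Ej]]|_]; last by rewrite mul0r.
case: ifP => [/andP [/mapP [a' ha' Ea'] _]|_]; last by rewrite mulr0.
have ea : a = a' by apply: rinj; rewrite Ei Ea'.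
exfalso; apply: hn; exists a' => //; subst; by rewrite !eqxx.
Qed.

Lemma Aone_schatten p : 0 < p -> schatten p Aone <= n%:R.
Proof.
move=> p0; apply: (schatten_le p0 Aone_fs (ler0n _ _) Aone_sing0).
exact: Aone_singk.
Qed.

Lemma Pm_schatten p : 0 < p -> n%:R `^ (p^-1) <= schatten p Pm.
Proof. move=> p0; apply: (schatten_ge p0 Pm_fs); exact: Pm_sing. Qed.

End Construction.

Fixpoint Fseq (g : seq nat -> nat * nat) (m : nat) : seq nat :=
  if m is m'.+1 then (g (Fseq g m')).1 :: (g (Fseq g m')).2 :: Fseq g m' else [::].

Lemma Fseq_mem g a b : (a < b)%N ->
  (g (Fseq g a)).1 \in Fseq g b /\ (g (Fseq g a)).2 \in Fseq g b.
Proof.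
elim: b => [//|b IH]; rewrite ltnS leq_eqVlt => /orP [/eqP ->|hab].
  by rewrite /= !inE !eqxx orbT.
by case: (IH hab) => h1 h2; rewrite /= !inE h1 h2 !orbT.
Qed.

Lemma Fseq_inj1 g : (forall F, (g F).1 \notin F /\ (g F).2 \notin F) ->
  injective (fun a => (g (Fseq g a)).1).
Proof.
move=> hg a b /= E; case: (ltngtP a b) => // h.
  by case: (Fseq_mem g h) => h1 _; case: (hg (Fseq g b)) => h2 _; rewrite -E h1 in h2.
by case: (Fseq_mem g h) => h1 _; case: (hg (Fseq g a)) => h2 _; rewrite E h1 in h2.
Qed.

Lemma Fseq_inj2 g : (forall F, (g F).1 \notin F /\ (g F).2 \notin F) ->
  injective (fun a => (g (Fseq g a)).2).
Proof.
move=> hg a b /= E; case: (ltngtP a b) => // h.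
  by case: (Fseq_mem g h) => _ h1; case: (hg (Fseq g b)) => _ h2; rewrite -E h1 in h2.
by case: (Fseq_mem g h) => _ h1; case: (hg (Fseq g a)) => _ h2; rewrite E h1 in h2.
Qed.

Lemma growth (p Cm : RR) : 0 < p -> p < 1 ->
  exists n : nat, `|Cm| * n%:R < n%:R `^ (p^-1).
Proof.
move=> p0 p1.
set q := p^-1 - 1.
have q0 : 0 < q by rewrite /q subr_gt0 invf_gt1.
set K0 := `|Cm| `^ q^-1.
exists (Num.truncn K0).+1; set n := (Num.truncn K0).+1.
have hK : K0 < n%:R by apply: real_truncnS_gt; exact: num_real.
have n0 : 0 < n%:R :> RR by rewrite ltr0n.
have -> : p^-1 = 1 + q by rewrite /q addrC subrK.
rewrite powRD; last by apply/implyP => _; rewrite gt_eqF.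
rewrite powRr1 ?ler0n // [n%:R * _]mulrC ltr_pM2r //.
have : K0 `^ q < n%:R `^ q.
  by apply: gt0_ltr_powR => //; rewrite nnegrE ?powR_ge0 ?ltW.
by rewrite /K0 -powRrM mulVf ?gt_eqF // powRr1.
Qed.

Theorem mainTheorem3 (p : Rdefinitions.R) (hp0 : 0 < p) (hp1 : p < 1)
  (S : set (nat * nat)) :
  schur_bounded_pattern p S ->
  exists F : seq nat, forall j k, S (j, k) -> j \in F \/ k \in F.
Proof.
move=> hS.
have [//|hnF] := pselect (exists F : seq nat, forall j k, S (j, k) -> j \in F \/ k \in F).
exfalso.
have hex : forall F : seq nat, exists q : nat * nat, S q /\ (q.1 \notin F /\ q.2 \notin F).
  move=> F; apply: contrapT => H; apply: hnF; exists F => j k hjk.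
  case: (boolP (j \in F)) => hj; first by left.
  case: (boolP (k \in F)) => hk; first by right.
  by exfalso; apply: H; exists (j, k).
have [g hg] := choice hex.
have hg' : forall F, (g F).1 \notin F /\ (g F).2 \notin F by move=> F; case: (hg F) => _ [].
set r := fun a => (g (Fseq g a)).1.
set c := fun a => (g (Fseq g a)).2.
have rinj : injective r := Fseq_inj1 hg'.
have cinj : injective c := Fseq_inj2 hg'.
have mb : Defs.bounded_fun (mdiag r c).
  by exists 1 => j k; rewrite /mdiag; case: asboolP; rewrite ?cabs1 ?cabs0.
have ms : forall j k, ~ S (j, k) -> mdiag r c j k = 0.
  move=> j k hjk; rewrite /mdiag; case: asboolP => // [[a [Ej Ek]]].
  exfalso; apply: hjk; rewrite -Ej -Ek /r /c -surjective_pairing.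
  by case: (hg (Fseq g a)).
have [Cm hC] := hS _ mb ms.
have [n hn] := growth Cm hp0 hp1.
have h1 := Pm_schatten rinj cinj n hp0.
rewrite -(schur_diag c rinj n) in h1.
have h2 := hC _ (Aone_fs r c n).
have h3 := Aone_schatten r c n hp0.
have s0 : 0 <= schatten p (Aone r c n) by rewrite powR_ge0.
have : n%:R `^ p^-1 <= `|Cm| * n%:R.
  apply: le_trans h1 _; apply: le_trans h2 _.
  apply: le_trans (ler_wpM2r s0 (ler_norm Cm)) _.
  exact: (ler_wpM2l (normr_ge0 Cm) h3).
by rewrite leNgt hn.
Qed.
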